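(* Let $H\in\mathcal K_r(n)$ and let $X\subseteq[n]$. Let $\mathcal A$ be the set of all hyperedges $A$ of $H$ with $X\subseteq A$ and $|A|\le n/2$. If $\mathcal A$ is nonempty, then $\bigcap_{A\in\mathcal A} A$ belongs to $\mathcal A$.
   Context: $\mathcal K_r(n)$ is the class of hypergraphs on vertex set $V=[n]$ (identified with their hyperedge sets $\mathcal E$) satisfying: (R0) every $X\subseteq V$ with $|X|\le r$ is in $\mathcal E$; (R1) $A\in\mathcal E\Rightarrow V\setminus A\in\mathcal E$; (R2) $A,B\in\mathcal E$ and $|A\cap B|\ge r\Rightarrow A\cup B\in\mathcal E$. *)

(* Defs.v *)
From mathcomp Require Import all_boot.
Set Implicit Arguments. Unset Strict Implicit. Unset Printing Implicit Defensive.

Definition in_K (r : nat) {n : nat} (E : {set {set 'I_n}}) : Prop :=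
  (* (R0) *) (forall X : {set 'I_n}, #|X| <= r -> X \in E) /\
  (* (R1) *) (forall A, A \in E -> ~: A \in E) /\
  (* (R2) *) (forall A B, A \in E -> B \in E -> r <= #|A :&: B| -> A :|: B \in E).

Definition calA {n : nat} (E : {set {set 'I_n}}) (X : {set 'I_n}) : {set {set 'I_n}} :=
  [set A in E | (X \subset A) && (2 * #|A| <= n)].

(* Main.v *)
Require Import Defs.
From mathcomp Require Import all_boot.
From mathcomp Require Import zify.

Lemma calA_inter r n (E : {set {set 'I_n}}) (X : {set 'I_n}) A B :
  in_K r E -> A \in calA E X -> B \in calA E X -> A :&: B \in calA E X.
Proof.
move=> [R0 [R1 R2]]; rewrite !inE => /andP[AE /andP[XA hA]] /andP[BE /andP[XB hB]].
have cI : #|A :&: B| <= #|A| by apply: subset_leq_card; apply: subsetIl.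
rewrite subsetI XA XB /=.
have -> : A :&: B \in E.
  case: (leqP #|A :&: B| r) => h; first exact: R0.
  have U : #|A :|: B| + #|A :&: B| = #|A| + #|B| by apply: cardsUI.
  have C : #|~: A :&: ~: B| = n - #|A :|: B|.
    by rewrite -setCU cardsCs setCK card_ord.
  have H := R2 _ _ (R1 _ AE) (R1 _ BE).
  have : ~: A :|: ~: B \in E by apply: H; rewrite C; move: hA hB h U cI; lia.
  by move/R1; rewrite setCU !setCK.
by rewrite /=; apply: leq_trans hA; rewrite leq_mul2l cI orbT.
Qed.

Lemma argm n (E : {set {set 'I_n}}) (X : {set 'I_n}) A0 : A0 \in calA E X ->
  exists2 M, M \in calA E X & forall B, B \in calA E X -> #|M| <= #|B|.
Proof.
move=> HA0.
case: (arg_minnP (fun A : {set 'I_n} => #|A|) HA0) => M HM Hmin.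
exists M. exact: HM. move=> B HB. exact: Hmin.
Qed.
Theorem mainTheorem10 (r n : nat) (E : {set {set 'I_n}}) (X : {set 'I_n}) :
  in_K r E ->
  calA E X != set0 ->
  \bigcap_(A in calA E X) A \in calA E X.
Proof.
move=> HK /set0Pn [A0 HA0].
have [M HM Hmin] := @argm n E X A0 HA0.
have sub : forall A, A \in calA E X -> M \subset A.
  move=> A HA.
  have HI := @calA_inter r n E X M A HK HM HA.
  have h1 := Hmin _ HI.
  have : M :&: A = M.
    by apply/eqP; rewrite eqEcard subsetIl; exact: h1.
  by move/setIidPl.
suff -> : \bigcap_(A in calA E X) A = M by exact: HM.
apply/eqP; rewrite eqEsubset; apply/andP; split.
  exact: bigcap_inf.
by apply/bigcapsP => A HA; apply: sub.
Qed.
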